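(* Let $n\ge 2$ be a power of two, $\ell\ge1$ an integer, and $N$ a positive integer multiple of $2n$. Then the distribution $\mathbf{D}_{n,\ell}$ can be sampled exactly by a sampler making two adaptive probes (per output bit) to independent uniform symbols from $[N]$.
   Context: Distribution $\mathbf{D}_{n,\ell}$: for $n\ge2$ a power of two and integer $\ell\ge1$, $\mathbf{D}_{n,\ell}$ is the distribution over $(\mathbf{i}^{(1)},\dots,\mathbf{i}^{(\ell)},\mathbf{x},\mathbf{y}^{(1)},\dots,\mathbf{y}^{(\ell)})\in\{0,1\}^{\ell\log n+(\ell+1)n}$ where each $\mathbf{i}^{(j)}$ is independently uniform on $\{0,1\}^{\log n}$ (identified with an element of $[n]$, equivalently of $\mathbb{Z}_n$, via a fixed bijection), $\mathbf{x}$ is uniform on $\{0,1\}^n$ independent of the shifts, and $\mathbf{y}^{(j)}_k=\mathbf{x}_{k+\mathbf{i}^{(j)}\bmod n}$ for all $j\in[\ell]$, $k\in[n]$ (indices of $\mathbf{x}$ taken modulo $n$). Logarithms are base 2. A sampler making two adaptive probes to independent uniform symbols from $[N]$ is given an arbitrarily long sequence $R_1,R_2,\dots$ of independent uniform elements of $[N]$; each output bit is computed by reading one symbol $R_a$ at a fixed position $a$ (depending only on the output index), then reading one symbol $R_b$ whose position $b$ may depend on the value of $R_a$, and outputting a function of the two read values; it samples $\mathbf{D}$ exactly if its output distribution equals $\mathbf{D}$. *)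

(* Defs.v *)
From mathcomp Require Import all_boot all_order all_algebra.
Set Implicit Arguments. Unset Strict Implicit. Unset Printing Implicit Defensive.
Import Order.TTheory GRing.Theory Num.Theory.

(* n = 2^k, so log n = k. *)
Lemma pow2_gt0 (k : nat) : 0 < 2 ^ k.
Proof. by rewrite expn_gt0. Qed.

(* Output coordinates of D_{n,l}:
   inl (inl (j,t)) : bit t of i^(j)      (j < l, t < log n)
   inl (inr m)     : x_m                 (m < n)
   inr (j,m)       : y^(j)_m             (j < l, m < n) *)
Definition out_idx (k l : nat) : finType :=
  ((('I_l * 'I_k) + 'I_(2 ^ k)) + ('I_l * 'I_(2 ^ k)))%type.

Definition shift_idx (k : nat) (m s : 'I_(2 ^ k)) : 'I_(2 ^ k) :=
  Ordinal (ltn_pmod (m + s) (pow2_gt0 k)).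

(* The deterministic map (i^(1..l), x) |-> sample of D_{n,l}.
   The fixed bijection {0,1}^{log n} <-> [n] is binary representation:
   bit t of i is odd (i / 2^t). *)
Definition D_map (k l : nat) (i : {ffun 'I_l -> 'I_(2 ^ k)})
    (x : {ffun 'I_(2 ^ k) -> bool}) : {ffun out_idx k l -> bool} :=
  [ffun o : out_idx k l =>
     match o with
     | inl (inl (j, t)) => odd (i j %/ 2 ^ t)
     | inl (inr m) => x m
     | inr (j, m) => x (shift_idx m (i j))
     end].

Definition D_prob (k l : nat) (w : {ffun out_idx k l -> bool}) : rat :=
  ((#|[set p : ({ffun 'I_l -> 'I_(2 ^ k)} * {ffun 'I_(2 ^ k) -> bool})%type
        | D_map p.1 p.2 == w]|)%:R
  / (#|{: ({ffun 'I_l -> 'I_(2 ^ k)} * {ffun 'I_(2 ^ k) -> bool})%type}|)%:R)%R.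

(* A two-adaptive-probe sampler reading symbols R_0..R_{M-1} in [N]:
   output bit o is f o (R (a o)) (R (b o (R (a o)))). *)
Definition sampler_out (O : finType) (N M : nat) (a : O -> 'I_M)
    (b : O -> 'I_N -> 'I_M) (f : O -> 'I_N -> 'I_N -> bool)
    (R : {ffun 'I_M -> 'I_N}) : {ffun O -> bool} :=
  [ffun o => f o (R (a o)) (R (b o (R (a o))))].

Definition sampler_prob (O : finType) (N M : nat) (a : O -> 'I_M)
    (b : O -> 'I_N -> 'I_M) (f : O -> 'I_N -> 'I_N -> bool)
    (w : {ffun O -> bool}) : rat :=
  ((#|[set R : {ffun 'I_M -> 'I_N} | sampler_out a b f R == w]|)%:R
  / (#|{: {ffun 'I_M -> 'I_N}}|)%:R)%R.

(* Main.v *)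
Require Import Defs.
From mathcomp Require Import all_boot all_order all_algebra.
From mathcomp Require Import zify.
Import GRing.Theory Num.Theory.

Lemma res_count (N d c : nat) : 0 < d -> d %| N.+1 -> c < d ->
  #|[pred y : 'I_N.+1 | y %% d == c]| = N.+1 %/ d.
Proof.
move=> d0 dN cd.
pose g (q : 'I_(N.+1 %/ d)) : 'I_N.+1 := inord (q * d + c).
have gv (q : 'I_(N.+1 %/ d)) : (g q : nat) = q * d + c.
  rewrite inordK //. have := ltn_ord q. move: (val q) => qq. move/dvdnP: dN => [e He].
  rewrite He mulnK // => qe. have : qq.+1 * d <= e * d by rewrite leq_mul2r qe orbT.
  rewrite mulSn. move: cd; clear -He; lia.
have ginj : injective g.
  move=> q1 q2 /(congr1 val) /=; rewrite !gv => /eqP; rewrite eqn_add2r eqn_pmul2r //.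
  by move/eqP/val_inj.
rewrite -[RHS](card_ord) -(card_imset _ ginj).
apply: eq_card => y; rewrite inE /=.
apply/eqP/imsetP.
  move=> hy; have yl : y %/ d < N.+1 %/ d.
    by rewrite ltn_divLR // divnK.
  exists (Ordinal yl) => //; apply: val_inj => /=; rewrite gv /= -hy; exact: divn_eq.
by move=> [q _ ->] /=; rewrite gv modnMDl modn_small.
Qed.

Lemma family_count (M N : nat) (F : 'I_M -> pred 'I_N) :
  #|[set R : {ffun 'I_M -> 'I_N} | [forall i, R i \in F i]]| = \prod_(i < M) #|F i|.
Proof.
have -> : #|[set R : {ffun 'I_M -> 'I_N} | [forall i, R i \in F i]]| = #|family F|.
  apply: eq_card => R; rewrite inE; apply/forallP/familyP => //.
by rewrite card_family foldrE big_map big_enum.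
Qed.

Lemma fiber_count (A B : finType) (phi : A -> B) (s : nat) (g : pred B) :
  (forall p, #|[set x | phi x == p]| = s) ->
  #|[set x | g (phi x)]| = s * #|[set p | g p]|.
Proof.
move=> hs.
rewrite -!sum1_card (partition_big phi g) /=; last by move=> x; rewrite inE.
rewrite big_distrr /=; apply: eq_big => [p|p gp]; first by rewrite inE.
rewrite muln1 -(hs p) -sum1_card; apply: eq_bigl => x; rewrite !inE.
by case: (phi x =P p) => [->|]; rewrite ?gp ?andbF.
Qed.

Definition modn_ord (k N : nat) (r : 'I_N) : 'I_(2 ^ k) :=
  Ordinal (ltn_pmod r (pow2_gt0 k)).

Definition sa (k l : nat) (o : out_idx k l) : 'I_(l + 2 ^ k) :=
  match o with
  | inl (inl (j, _)) => lshift _ j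
  | inl (inr m) => rshift _ m
  | inr (j, _) => lshift _ j
  end.

Definition sb (k l N : nat) (o : out_idx k l) (r : 'I_N) : 'I_(l + 2 ^ k) :=
  match o with
  | inr (j, m) => rshift l (shift_idx m (@modn_ord k N r))
  | _ => @sa k l o
  end.

Definition sf (k l N : nat) (o : out_idx k l) (v1 v2 : 'I_N) : bool :=
  match o with
  | inl (inl (j, t)) => odd ((v1 %% 2 ^ k) %/ 2 ^ t)
  | inl (inr m) => odd v1
  | inr _ => odd v2
  end.

Definition phi (k l N : nat) (R : {ffun 'I_(l + 2 ^ k) -> 'I_N}) :
  ({ffun 'I_l -> 'I_(2 ^ k)} * {ffun 'I_(2 ^ k) -> bool})%type :=
  ([ffun j => @modn_ord k N (R (lshift _ j))], [ffun m => odd (R (rshift _ m))]).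

Lemma out_eq (k l N : nat) R :
  sampler_out (@sa k l) (@sb k l N) (@sf k l N) R = D_map (@phi k l N R).1 (@phi k l N R).2.
Proof.
by apply/ffunP; case => [[[j t]|m]|[j m]]; rewrite !ffunE.
Qed.

Theorem claim2 (k l N : nat) :
  1 <= k -> 1 <= l -> 0 < N -> (2 * 2 ^ k %| N) ->
  exists (M : nat) (a : out_idx k l -> 'I_M)
         (b : out_idx k l -> 'I_N -> 'I_M)
         (f : out_idx k l -> 'I_N -> 'I_N -> bool),
    forall w : {ffun out_idx k l -> bool},
      sampler_prob a b f w = D_prob w.
Proof.
case: N => // N hk hl _ hdiv.
exists (l + 2 ^ k), (@sa k l), (@sb k l N.+1), (@sf k l N.+1) => w.
have n0 := pow2_gt0 k.
have dn : 2 ^ k %| N.+1 by apply: dvdn_trans hdiv; apply: dvdn_mull.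
have d2 : 2 %| N.+1 by apply: dvdn_trans hdiv; apply: dvdn_mulr.
pose s := (N.+1 %/ 2 ^ k) ^ l * (N.+1 %/ 2) ^ (2 ^ k).
have hs : forall p, #|[set R | @phi k l N.+1 R == p]| = s.
  move=> [p1 p2].
  pose F (i : 'I_(l + 2 ^ k)) : pred 'I_N.+1 :=
    match split i with
    | inl j => [pred y : 'I_N.+1 | y %% 2 ^ k == p1 j]
    | inr m => [pred y : 'I_N.+1 | y %% 2 == p2 m]
    end.
  have -> : [set R | @phi k l N.+1 R == (p1, p2)] =
            [set R : {ffun 'I_(l + 2 ^ k) -> 'I_N.+1} | [forall i, R i \in F i]].
    apply/setP => R; rewrite !inE.
    rewrite /phi xpair_eqE; apply/andP/forallP.
      move=> [/eqP h1 /eqP h2] i; move: (splitK i); rewrite /F.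
      case: (split i) => [j|m] /= <-; rewrite inE.
        by rewrite -h1 ffunE.
      by rewrite -h2 ffunE modn2.
    move=> h; split; apply/eqP/ffunP.
      move=> j; rewrite ffunE; apply: val_inj => /=.
      by have := h (lshift _ j); rewrite /F (unsplitK (inl j)) inE => /eqP.
    move=> m; rewrite ffunE.
    have := h (rshift _ m); rewrite /F (unsplitK (inr m)) inE modn2.
    by case: (odd _); case: (p2 m).
  rewrite family_count big_split_ord /=.
  rewrite (eq_bigr (fun _ => N.+1 %/ 2 ^ k)); last first.
    move=> j _; rewrite /F (unsplitK (inl j)); exact: res_count.
  rewrite [X in _ * X](eq_bigr (fun _ => N.+1 %/ 2)); last first.
    move=> m _; rewrite /F (unsplitK (inr m)); apply: res_count => //.
    by case: (p2 m).
  by rewrite !prod_nat_const !card_ord.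
have s0 : s != 0.
  have h1 : 0 < N.+1 %/ 2 ^ k by rewrite divn_gt0 // dvdn_leq.
  have h2 : 0 < N.+1 %/ 2 by rewrite divn_gt0 // dvdn_leq.
  rewrite -lt0n /s muln_gt0; apply/andP; split; rewrite expn_gt0 ?h1 ?h2 //.
clearbody s.
rewrite /sampler_prob /D_prob.
have -> : #|[set R | sampler_out (@sa k l) (@sb k l N.+1) (@sf k l N.+1) R == w]|
        = s * #|[set p | D_map p.1 p.2 == w]|.
  rewrite -(@fiber_count _ _ _ _ (fun p => D_map p.1 p.2 == w) hs).
  by apply: eq_card => R; rewrite !inE out_eq.
have -> : #|{: {ffun 'I_(l + 2 ^ k) -> 'I_N.+1}}| = s * #|{: ({ffun 'I_l -> 'I_(2 ^ k)} * {ffun 'I_(2 ^ k) -> bool})%type}|.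
  rewrite -!cardsT. have := @fiber_count _ _ _ _ predT hs.
  by rewrite !cardsE.
rewrite !natrM -mulf_div divff ?mul1r //.
by rewrite pnatr_eq0.
Qed.
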